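(* Let $E=(E,q)$ be a formed space. (1) For any $W\in\mathcal{P}^\omega(E)$, the map $G(E)_W\to\operatorname{GL}(W)_{R(E)}\times G(W^\perp/W)$ sending $f$ to its restriction to $W$ and its induced map on $W^\perp/W$ is split surjective. (2) For any $U\in\mathcal{P}^\omega(E)$ and $W\in\mathcal{P}^\omega(E,U)$, the analogous map $A(E,U)_W\to A^T(W,W\cap U^\perp)_{\mathrm{id}_{R(E)}}\times G(W^\perp/W)$ is split surjective.
   Context: Formed spaces over a field with involution $\sigma$ ($\bar c=\sigma(c)$), $\varepsilon$ ($\varepsilon\bar\varepsilon=1$), $\Lambda$ ($\{c-\varepsilon\bar c\}\le\Lambda\le\{c:c+\varepsilon\bar c=0\}$): a form on finite-dimensional $E$ is a sesquilinear map modulo those $f$ with $f(v,v)\in\Lambda$, $f(w,v)=-\varepsilon\overline{f(v,w)}$; $\omega_q(v,w)=q(v,w)+\varepsilon\overline{q(w,v)}$, $Q_q(v)=q(v,v)+\Lambda$; radical $R(E)=\{v:\omega_q(E,v)=0,Q_q(v)=0\}$; $U^\perp=\{v:\omega_q(v,U)=0\}$; isotropic means $\omega_q,Q_q$ vanish. $\mathcal{P}^\omega(E)$: isotropic $W$ with $R(E)<W<E$; $\mathcal{P}^\omega(E,U)$: those also satisfying $W+U^\perp=E$. For $W$ isotropic, $W^\perp/W$ carries the unique form making $W^\perp\to W^\perp/W$ an isometry. $G(E)$ is the group of bijective isometries, $G(E)_W$ its stabilizer of $W$; $A(E,U)$ the subgroup fixing $U$ pointwise, $A(E,U)_W$ its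 stabilizer of $W$. $\operatorname{GL}(W)_{R(E)}$ is the subgroup of $\operatorname{GL}(W)$ preserving $R(E)$; $A^T(W,W_0)=\{g\in\operatorname{GL}(W):g(w)-w\in W_0\ \forall w\}$, and the subscript $\mathrm{id}_{R(E)}$ denotes the subgroup restricting to the identity on $R(E)$. *)

(* Defs.v *)
From HB Require Import structures.
From mathcomp Require Import all_boot all_order all_algebra.
Set Implicit Arguments. Unset Strict Implicit. Unset Printing Implicit Defensive.
Import GRing.Theory.
Local Open Scope ring_scope.

Section FormedSpaces.
Variable K : fieldType.
Variable sigma : K -> K.
Variable eps : K.
Variable Lam : {pred K}.

(* (sigma, eps, Lam) form parameter: sigma an involutive field automorphism
   (ring morphism is required separately via the type {rmorphism K -> K}),
   eps * \bar eps = 1, Lam an additive subgroup with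
   {c - eps \bar c} <= Lam <= {c | c + eps \bar c = 0}, closed under
   l |-> a l \bar a (standard form-parameter axiom). *)
Definition form_param : Prop :=
  [/\ involutive sigma /\ eps * sigma eps = 1,
      (0 \in Lam) /\ (forall x y, x \in Lam -> y \in Lam -> x - y \in Lam),
      (forall a l, l \in Lam -> a * l * sigma a \in Lam),
      (forall c, c - eps * sigma c \in Lam) &
      (forall c, c \in Lam -> c + eps * sigma c = 0)].

Variable E : vectType K.

Definition sesq (q : E -> E -> K) : Prop :=
  (forall w a v1 v2, q (a *: v1 + v2) w = a * q v1 w + q v2 w) /\
  (forall v a w1 w2, q v (a *: w1 + w2) = q v w1 * sigma a + q v w2).

(* f is a "null" sesquilinear map on the subset D (i.e. represents the zero
   form there): f(v,v) \in Lam and f(w,v) = - eps \bar{f(v,w)}. *)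
Definition nullform (D : E -> Prop) (f : E -> E -> K) : Prop :=
  (forall v w, D v -> D w -> f w v = - (eps * sigma (f v w))) /\
  (forall v, D v -> f v v \in Lam).

Definition omega (q : E -> E -> K) (v w : E) : K := q v w + eps * sigma (q w v).

(* Q_q(v) = 0 in K/Lam  iff  q(v,v) \in Lam *)
Definition radical (q : E -> E -> K) (v : E) : Prop :=
  (forall u, omega q u v = 0) /\ q v v \in Lam.

Definition orthv (q : E -> E -> K) (U : {vspace E}) : {vspace E} :=
  (\bigcap_(i < \dim U)
     lker (linfun (fun v : E => (omega q v (tnth (vbasis U) i) : K^o))))%VS.

Definition isotropic (q : E -> E -> K) (W : {vspace E}) : Prop :=
  (forall v w, v \in W -> w \in W -> omega q v w = 0) /\
  (forall v, v \in W -> q v v \in Lam).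

Definition Pomega (q : E -> E -> K) (W : {vspace E}) : Prop :=
  [/\ isotropic q W,
      (forall v, radical q v -> v \in W),
      (exists2 w, w \in W & ~ radical q w) &
      (exists v, v \notin W)].

Definition PomegaU (q : E -> E -> K) (U W : {vspace E}) : Prop :=
  Pomega q W /\ (W + orthv q U = fullv)%VS.

(* G(E): bijective isometries (f^* q = q as forms) *)
Definition isomE (q : E -> E -> K) (f : 'End(E)) : Prop :=
  bijective f /\ nullform (fun _ => True) (fun v w => q (f v) (f w) - q v w).

Definition GLR (q : E -> E -> K) (W : {vspace E}) (g : 'End(subvs_of W)) : Prop :=
  bijective g /\ (forall w, radical q (vsval w) <-> radical q (vsval (g w))).

Definition ATid (q : E -> E -> K) (W W0 : {vspace E}) (g : 'End(subvs_of W)) : Prop :=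
  [/\ bijective g, (forall w, vsval (g w) - vsval w \in W0) &
      (forall w, radical q (vsval w) -> g w = w)].

End FormedSpaces.

(* (F, qF, pi) is a model of the quotient formed space W^perp/W: pi restricted
   to W^perp is onto F with kernel W, and is an isometry (pi^* qF = q on W^perp). *)
Definition is_quotient (K : fieldType) (sigma : K -> K) (eps : K) (Lam : {pred K})
    (E : vectType K) (q : E -> E -> K) (W : {vspace E})
    (F : vectType K) (qF : F -> F -> K) (pi : 'Hom(E, F)) : Prop :=
  [/\ sesq sigma qF,
      (pi @: orthv sigma eps q W = fullv)%VS,
      (orthv sigma eps q W :&: lker pi = W)%VS &
      nullform sigma eps Lam (fun v => v \in orthv sigma eps q W)
        (fun v w => qF (pi v) (pi w) - q v w)].

(* s is a homomorphic section of  f |-> (f|_W, induced map on W^perp/W),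
   from the group HE <= G(E) onto HW x G(W^perp/W). *)
Definition split_section (K : fieldType) (sigma : K -> K) (eps : K) (Lam : {pred K})
    (E : vectType K) (q : E -> E -> K) (W : {vspace E})
    (F : vectType K) (qF : F -> F -> K) (pi : 'Hom(E, F))
    (HE : 'End(E) -> Prop) (HW : 'End(subvs_of W) -> Prop)
    (s : 'End(subvs_of W) * 'End(F) -> 'End(E)) : Prop :=
  (forall g h, HW g -> isomE sigma eps Lam qF h ->
     [/\ HE (s (g, h)),
         (forall w : subvs_of W, s (g, h) (vsval w) = vsval (g w)) &
         (forall v, v \in orthv sigma eps q W -> pi (s (g, h) v) = h (pi v))]) /\
  (forall g1 h1 g2 h2, HW g1 -> isomE sigma eps Lam qF h1 ->
     HW g2 -> isomE sigma eps Lam qF h2 ->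
     s ((g1 \o g2)%VF, (h1 \o h2)%VF) = (s (g1, h1) \o s (g2, h2))%VF).

(* Main.v *)
Require Import Defs.
From HB Require Import structures.
From mathcomp Require Import all_boot all_order all_algebra.
From mathcomp Require Import ring.
Set Implicit Arguments. Unset Strict Implicit. Unset Printing Implicit Defensive.
Import GRing.Theory.
Local Open Scope ring_scope.

Lemma linfunE' (K : fieldType) (aT rT : vectType K) (f : aT -> rT) (lf : linear f) : linfun f =1 f.
Proof.
pose F : {linear aT -> rT} := HB.pack f (GRing.isLinear.Build _ _ _ _ f lf).
exact: (lfunE F).
Qed.

Lemma null_om (K : fieldType) (sigma : {rmorphism K -> K}) (eps : K) (Lam : {pred K})
  (V : vectType K) (p p' : V -> V -> K) (P : V -> Prop) v w :
  nullform sigma eps Lam P (fun v w => p' v w - p v w) -> P v -> P w ->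
  omega sigma eps p' w v = omega sigma eps p w v.
Proof.
move=> [H _] Pv Pw; have {}H := H v w Pv Pw.
have E1 : p' w v = p w v - eps * sigma (p' v w - p v w) by rewrite -H; ring.
by rewrite /omega E1 rmorphB; ring.
Qed.

Lemma bij_inv (K : fieldType) (V : vectType K) (f : 'End(V)) :
  bijective f -> cancel f (f^-1)%VF /\ cancel (f^-1)%VF f.
Proof.
move=> Hb; have Hi : injective f by apply: bij_inj.
split; first by apply: lker0_lfunK; apply/lker0P.
move=> y; apply: limg_lfunVK; case: Hb => g _ Hg; rewrite -[y]Hg.
by apply: memv_img; apply: memvf.
Qed.

Lemma sum_delta (K : fieldType) n (l : 'I_n) (f : 'I_n -> K) :
  \sum_(i < n) (i == l)%:R * f i = f l.
Proof.
rewrite (bigD1 l) //= eqxx mul1r big1 ?addr0 // => i /negbTE ->; by rewrite mul0r.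
Qed.
Lemma sum_delta' (K : fieldType) n (l : 'I_n) (f : 'I_n -> K) :
  \sum_(i < n) f i * (i == l)%:R = f l.
Proof. by rewrite -[RHS](sum_delta l); apply: eq_bigr => i _; rewrite mulrC. Qed.
Lemma sum_delta2 (K : fieldType) n (l : 'I_n) (f : 'I_n -> K) :
  \sum_(i < n) f i * (l == i)%:R = f l.
Proof. by rewrite -[RHS](sum_delta l); apply: eq_bigr => i _; rewrite mulrC eq_sym. Qed.
Lemma sum_deltaV (K : fieldType) (V : vectType K) n (l : 'I_n) (f : 'I_n -> V) :
  \sum_(i < n) (i == l)%:R *: f i = f l.
Proof.
rewrite (bigD1 l) //= eqxx scale1r big1 ?addr0 // => i /negbTE ->; by rewrite scale0r.
Qed.

Section Basic.
Variables (K : fieldType) (sigma : {rmorphism K -> K}) (eps : K) (Lam : {pred K}).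
Variables (E : vectType K) (q : E -> E -> K).
Hypothesis Hfp : form_param sigma eps Lam.
Hypothesis Hsq : sesq sigma q.

Local Notation om := (omega sigma eps q).

Lemma sK : involutive sigma. Proof. by case: Hfp => -[]. Qed.
Lemma epsK : eps * sigma eps = 1. Proof. by case: Hfp => -[]. Qed.
Lemma epsK' : sigma eps * eps = 1. Proof. by rewrite mulrC epsK. Qed.
Lemma Lam0 : 0 \in Lam. Proof. by case: Hfp => _ []. Qed.
Lemma LamB x y : x \in Lam -> y \in Lam -> x - y \in Lam.
Proof. by case: Hfp => _ [_ H] _ _ _; apply: H. Qed.
Lemma LamN y : y \in Lam -> - y \in Lam.
Proof. by move=> Hy; rewrite -sub0r; apply: LamB => //; apply: Lam0. Qed.
Lemma LamD x y : x \in Lam -> y \in Lam -> x + y \in Lam.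
Proof. by move=> Hx Hy; rewrite -[y]opprK; apply: LamB => //; apply: LamN. Qed.
Lemma LamM a l : l \in Lam -> a * l * sigma a \in Lam.
Proof. by case: Hfp => _ _ H _ _; apply: H. Qed.
Lemma LamC c : c - eps * sigma c \in Lam.
Proof. by case: Hfp => _ _ _ H _; apply: H. Qed.
Lemma LamP c : c \in Lam -> c + eps * sigma c = 0.
Proof. by case: Hfp => _ _ _ _ H; apply: H. Qed.
Lemma Lam_eq x y : x = y -> x \in Lam -> y \in Lam. Proof. by move=> ->. Qed.

Lemma q0l w : q 0 w = 0.
Proof.
have H := Hsq.1 w 1 0 0; rewrite scale1r add0r mul1r in H.
by apply: (addrI (q 0 w)); rewrite addr0 -H.
Qed.
Lemma qDl v1 v2 w : q (v1 + v2) w = q v1 w + q v2 w.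
Proof. by have := Hsq.1 w 1 v1 v2; rewrite scale1r mul1r. Qed.
Lemma qZl a v w : q (a *: v) w = a * q v w.
Proof. by have := Hsq.1 w a v 0; rewrite addr0 q0l addr0. Qed.
Lemma qNl v w : q (- v) w = - q v w.
Proof. by rewrite -scaleN1r qZl mulN1r. Qed.
Lemma qBl v1 v2 w : q (v1 - v2) w = q v1 w - q v2 w.
Proof. by rewrite qDl qNl. Qed.
Lemma q0r v : q v 0 = 0.
Proof.
have H := Hsq.2 v 1 0 0; rewrite scale1r add0r rmorph1 mulr1 in H.
by apply: (addrI (q v 0)); rewrite addr0 -H.
Qed.
Lemma qDr v w1 w2 : q v (w1 + w2) = q v w1 + q v w2.
Proof. by have := Hsq.2 v 1 w1 w2; rewrite scale1r rmorph1 mulr1. Qed.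
Lemma qZr a v w : q v (a *: w) = q v w * sigma a.
Proof. by have := Hsq.2 v a w 0; rewrite addr0 q0r addr0. Qed.

Lemma om0l w : om 0 w = 0.
Proof. by rewrite /omega q0l q0r rmorph0 mulr0 addr0. Qed.
Lemma omDl v1 v2 w : om (v1 + v2) w = om v1 w + om v2 w.
Proof. by rewrite /omega qDl qDr rmorphD mulrDr addrACA. Qed.
Lemma omZl a v w : om (a *: v) w = a * om v w.
Proof.
by rewrite /omega qZl qZr rmorphM sK; ring.
Qed.
Lemma omNl v w : om (- v) w = - om v w.
Proof. by rewrite -scaleN1r omZl mulN1r. Qed.
Lemma omBl v1 v2 w : om (v1 - v2) w = om v1 w - om v2 w.
Proof. by rewrite omDl omNl. Qed.
Lemma om0r v : om v 0 = 0.
Proof. by rewrite /omega q0l q0r rmorph0 mulr0 addr0. Qed.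
Lemma omDr v w1 w2 : om v (w1 + w2) = om v w1 + om v w2.
Proof. by rewrite /omega qDl qDr rmorphD mulrDr addrACA. Qed.
Lemma omZr a v w : om v (a *: w) = om v w * sigma a.
Proof.
by rewrite /omega qZl qZr rmorphM; ring.
Qed.
Lemma omNr v w : om v (- w) = - om v w.
Proof. by rewrite -scaleN1r omZr rmorphN1 mulrN1. Qed.
Lemma omBr v w1 w2 : om v (w1 - w2) = om v w1 - om v w2.
Proof. by rewrite omDr omNr. Qed.
Lemma omsuml I (r : seq I) (P : pred I) (F : I -> E) w :
  om (\sum_(i <- r | P i) F i) w = \sum_(i <- r | P i) om (F i) w.
Proof.
elim/big_rec2: _ => [|i y x _ <-]; first exact: om0l.
by rewrite omDl.
Qed.
Lemma omsumr I (r : seq I) (P : pred I) (F : I -> E) v :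
  om v (\sum_(i <- r | P i) F i) = \sum_(i <- r | P i) om v (F i).
Proof.
elim/big_rec2: _ => [|i y x _ <-]; first exact: om0r.
by rewrite omDr.
Qed.
Lemma om_sym v w : om v w = eps * sigma (om w v).
Proof.
rewrite /omega rmorphD rmorphM sK mulrDr mulrA epsK mul1r addrC.
by [].
Qed.
Lemma om_eq0 v w : om v w = 0 -> om w v = 0.
Proof. by move=> H; rewrite om_sym H rmorph0 mulr0. Qed.

Lemma qsum_Lam u v : q (u + v) (u + v) - (q u u + q v v + om v u) \in Lam.
Proof.
rewrite qDl !qDr /omega.
have -> : q u u + q u v + (q v u + q v v) - (q u u + q v v + (q v u + eps * sigma (q u v)))
   = q u v - eps * sigma (q u v) by ring.
exact: LamC.
Qed.

Lemma Lam_om v : q v v \in Lam -> om v v = 0.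
Proof. by move=> H; rewrite /omega LamP. Qed.

Definition rad (v : E) := radical sigma eps Lam q v.

Lemma rad0 : rad 0.
Proof. by split=> [u|]; rewrite ?om0r ?q0l ?Lam0. Qed.
Lemma radD u v : rad u -> rad v -> rad (u + v).
Proof.
move=> [Hu1 Hu2] [Hv1 Hv2]; split=> [x|]; first by rewrite omDr Hu1 Hv1 addr0.
have := qsum_Lam u v; rewrite Hu1 addr0 => H.
have := LamD H (LamD Hu2 Hv2); by rewrite subrK.
Qed.
Lemma radZ a v : rad v -> rad (a *: v).
Proof.
move=> [H1 H2]; split=> [x|]; first by rewrite omZr H1 mul0r.
by rewrite qZl qZr mulrA; apply: LamM.
Qed.
Lemma radN v : rad v -> rad (- v).
Proof. by move=> H; rewrite -scaleN1r; apply: radZ. Qed.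
Lemma radB u v : rad u -> rad v -> rad (u - v).
Proof. by move=> Hu Hv; apply: radD => //; apply: radN. Qed.
Lemma rad_sum I (r : seq I) (P : pred I) (F : I -> E) :
  (forall i, P i -> rad (F i)) -> rad (\sum_(i <- r | P i) F i).
Proof. by move=> H; elim/big_rec: _ => [|i x Pi Hx]; [exact: rad0| apply: radD; auto]. Qed.

Lemma om_linear (w : E) : linear (fun v : E => (om v w : K^o)).
Proof. by move=> a u v; rewrite omDl omZl. Qed.

Lemma orthvP (U : {vspace E}) v :
  v \in orthv sigma eps q U <-> (forall u, u \in U -> om v u = 0).
Proof.
rewrite /orthv memvE; split.
  move/subv_bigcapP => H u Hu.
  rewrite (coord_vbasis Hu) omsumr big1 // => i _.
  have := H i isT; rewrite -memvE memv_ker linfunE'; last exact: om_linear.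
  by rewrite omZr /= (tnth_nth 0) => /eqP ->; rewrite mul0r.
move=> H; apply/subv_bigcapP => i _; rewrite -memvE memv_ker linfunE'; last exact: om_linear.
by rewrite /= H // vbasis_mem // mem_tnth.
Qed.


Lemma gen_dual k (z : 'I_k -> E) :
  (forall c : 'I_k -> K, (forall v, om v (\sum_i c i *: z i) = 0) -> forall i, c i = 0) ->
  forall t : 'I_k -> K, exists e, forall i, om e (z i) = t i.
Proof.
move=> Hz t.
pose n := \dim (fullv : {vspace E}).
pose b := vbasis (fullv : {vspace E}).
pose A : 'M[K]_(n, k) := \matrix_(a, i) om b`_a (z i).
have HA : row_full A.
  rewrite -col_leq_rank -mxrank_tr row_leq_rank -kermx_eq0.
  apply/rowV0P => v /sub_kermxP Hv.
  have Hc := Hz (fun i => sigma (v 0 i)).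
  apply/rowP => i; rewrite mxE.
  rewrite -[v 0 i]sK Hc ?rmorph0 //.
  move=> x; rewrite (coord_vbasis (memvf x)) omsuml big1 // => a _.
  rewrite omZl omsumr.
  have := congr1 (fun M : 'M_(1, n) => M 0 a) Hv; rewrite !mxE => Ha.
  rewrite -[X in _ * X](_ : \sum_j v 0 j * A^T j a = _); last first.
    by apply: eq_bigr => j _; rewrite omZr sK !mxE mulrC.
  by rewrite Ha mulr0.
have /submxP [D HD] : (\row_i t i <= A)%MS by apply: submx_full.
exists (\sum_a D 0 a *: b`_a) => i.
rewrite omsuml.
have := congr1 (fun M : 'M_(1, k) => M 0 i) HD; rewrite !mxE => ->.
by apply: eq_bigr => a _; rewrite omZl mxE.
Qed.

Lemma ATid_GLR (W W0 : {vspace E}) (g : 'End(subvs_of W)) :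
  ATid sigma eps Lam q (W := W) W0 g -> GLR sigma eps Lam q g.
Proof.
case=> Hb _ Hfix; split => // y; split => H; first by rewrite Hfix.
have := Hfix _ H => /(bij_inj Hb) Hy; by rewrite -Hy.
Qed.



Section Core.
Variables (W : {vspace E}) (F : vectType K) (qF : F -> F -> K) (pi : 'Hom(E, F)).
Hypothesis HQ : is_quotient sigma eps Lam q W qF pi.
Hypothesis HWiso : isotropic sigma eps Lam q W.
Hypothesis HRW : forall v, rad v -> v \in W.
Variables (k : nat) (w d : 'I_k -> E) (T : 'Hom(F, E)).
Hypothesis Hw : forall i, w i \in W.
Hypothesis Hspan : forall x, x \in W -> exists c : 'I_k -> K, rad (x - \sum_i c i *: w i).
Hypothesis Hdw : forall i j, om (d j) (w i) = (i == j)%:R.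
Hypothesis Hdd : forall i j, om (d i) (d j) = 0.
Hypothesis HdQ : forall j, q (d j) (d j) \in Lam.
Hypothesis HT1 : forall f, T f \in orthv sigma eps q W.
Hypothesis HT2 : forall f, pi (T f) = f.
Hypothesis HT3 : forall f j, om (T f) (d j) = 0.

Local Notation Wp := (orthv sigma eps q W).
Implicit Types (g : 'End(subvs_of W)) (h : 'End(F)).
Local Notation omF := (omega sigma eps qF).

Lemma W_Wp x : x \in W -> x \in Wp.
Proof. by move=> Hx; apply/orthvP => u Hu; apply: HWiso.1. Qed.

Lemma piW x : x \in W -> pi x = 0.
Proof.
case: HQ => _ _ HK _ Hx; move: Hx; rewrite -HK => /memv_capP [_].
by rewrite memv_ker => /eqP.
Qed.

Lemma kerW x : x \in Wp -> pi x = 0 -> x \in W.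
Proof. by case: HQ => _ _ HK _ H1 H2; rewrite -HK memv_cap H1 memv_ker H2 eqxx. Qed.

Lemma radW x : x \in W -> (forall u, om u x = 0) -> rad x.
Proof. by move=> Hx H; split => //; apply: HWiso.2. Qed.

Lemma om_d_sum j (c : 'I_k -> K) : om (d j) (\sum_i c i *: w i) = sigma (c j).
Proof.
rewrite omsumr; under eq_bigr do rewrite omZr Hdw.
by rewrite sum_delta.
Qed.

Lemma Wcoord x : x \in W -> rad (x - \sum_l sigma (om (d l) x) *: w l).
Proof.
move=> Hx; case: (Hspan Hx) => c Hc.
have Ex : x = (x - \sum_i c i *: w i) + \sum_i c i *: w i by rewrite subrK.
suff -> : \sum_l sigma (om (d l) x) *: w l = \sum_i c i *: w i by [].
apply: eq_bigr => l _; congr (_ *: _).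
by rewrite {1}Ex omDr Hc.1 add0r om_d_sum sK.
Qed.

Lemma om_W y : (forall l, om y (w l) = 0) -> forall x, x \in W -> om y x = 0.
Proof.
move=> H x Hx; have Hr := Wcoord Hx.
rewrite -[x](subrK (\sum_l sigma (om (d l) x) *: w l)) omDr Hr.1.
rewrite add0r omsumr big1 // => l _; by rewrite omZr H mul0r.
Qed.

Lemma om_wd i j : om (w i) (d j) = eps * (i == j)%:R.
Proof. by rewrite om_sym Hdw rmorph_nat. Qed.

Definition alpha j v := om v (w j).
Definition Px v := v - \sum_j alpha j v *: d j.
Definition Py v := Px v - T (pi (Px v)).

Lemma Px_Wp v : Px v \in Wp.
Proof.
apply/orthvP; apply: om_W => l.
rewrite /Px omBl omsuml; under eq_bigr do rewrite omZl Hdw.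
by rewrite sum_delta2 subrr.
Qed.

Lemma Py_W v : Py v \in W.
Proof.
apply: kerW; first by rewrite /Py rpredB ?Px_Wp ?HT1.
by rewrite /Py linearB /= HT2 subrr.
Qed.

Lemma decomp v : v = Py v + T (pi (Px v)) + \sum_j alpha j v *: d j.
Proof. by rewrite /Py subrK /Px subrK. Qed.

Lemma ext (f1 f2 : 'End(E)) : {in W, f1 =1 f2} -> (forall a, f1 (T a) = f2 (T a)) ->
  (forall j, f1 (d j) = f2 (d j)) -> f1 = f2.
Proof.
move=> H1 H2 H3; apply/lfunP => v; have Hv := decomp v.
rewrite [in f1 v]Hv [in f2 v]Hv; move: (Py_W v); move: (Py v) (Px v) => A B HA.
rewrite !linearD !linear_sum /= H1 // H2; congr (_ + _); apply: eq_bigr => j _.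
by rewrite !linearZ /= H3.
Qed.

Lemma alpha_lin j a u v : alpha j (a *: u + v) = a * alpha j u + alpha j v.
Proof. by rewrite /alpha omDl omZl. Qed.
Lemma Px_lin : linear Px.
Proof.
move=> a u v; rewrite /Px.
under eq_bigr do rewrite alpha_lin scalerDl -scalerA.
rewrite big_split /= -scaler_sumr scalerBr; by rewrite opprD addrACA.
Qed.
Lemma Py_lin : linear Py.
Proof.
move=> a u v; rewrite /Py Px_lin; move: (Px u) (Px v) => x y.
by rewrite !linearP /= scalerBr scalerN addrACA.
Qed.

Definition gE (g : 'End(subvs_of W)) (x : E) : E := vsval (g (vsproj W x)).
Lemma gE_lin g : linear (gE g).
Proof. by move=> a u v; rewrite /gE !linearP. Qed.
Lemma gE0 g : gE g 0 = 0. Proof. by rewrite /gE !linear0. Qed.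
Lemma gE_W g x : gE g x \in W. Proof. exact: subvsP. Qed.
Lemma gE_val g y : gE g (vsval y) = vsval (g y). Proof. by rewrite /gE vsvalK. Qed.
Lemma gE_comp g1 g2 x : gE g1 (gE g2 x) = gE (g1 \o g2)%VF x.
Proof. by rewrite /gE vsvalK comp_lfunE. Qed.

Definition Dm g j := \sum_l om (d j) (gE (g^-1)%VF (w l)) *: d l.
Definition sfun g (h : 'End(F)) v :=
  gE g (Py v) + T (h (pi (Px v))) + \sum_j alpha j v *: Dm g j.

Lemma sfun_lin g h : linear (sfun g h).
Proof.
move=> a u v; rewrite /sfun Py_lin Px_lin gE_lin.
move: (Py u) (Py v) (Px u) (Px v) => y1 y2 x1 x2.
under eq_bigr do rewrite alpha_lin scalerDl -scalerA.
rewrite big_split /= -scaler_sumr !linearP /= !scalerDr.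
set A := gE g y1; set B := gE g y2; set C := T _; set D := T _.
set X := \sum_(i < k) _; set Y := \sum_(i < k) _.
by rewrite [Z in Z + _]addrACA [LHS](addrACA (a *: A + a *: C)).
Qed.

Definition s g h : 'End(E) := linfun (sfun g h).
Lemma sE g h v : s g h v = sfun g h v.
Proof. exact: (linfunE' (sfun_lin g h)). Qed.

Lemma sW g h x : x \in W -> s g h x = gE g x.
Proof.
move=> Hx; rewrite sE /sfun.
have Ha j : alpha j x = 0 by rewrite /alpha HWiso.1.
have HPx : Px x = x by rewrite /Px big1 ?subr0 // => j _; rewrite Ha scale0r.
rewrite /Py HPx piW // !linear0 !addr0 big1 ?addr0 // => j _.
by rewrite Ha scale0r.
Qed.

Lemma sT g h a : s g h (T a) = T (h a).
Proof.
rewrite sE /sfun.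
have Ha j : alpha j (T a) = 0 by rewrite /alpha; move/orthvP: (HT1 a); apply.
have HPx : Px (T a) = T a by rewrite /Px big1 ?subr0 // => j _; rewrite Ha scale0r.
rewrite /Py HPx HT2 subrr gE0 add0r big1 ?addr0 // => j _.
by rewrite Ha scale0r.
Qed.

Lemma sd g h j : s g h (d j) = Dm g j.
Proof.
rewrite sE /sfun.
have HPx : Px (d j) = 0.
  rewrite /Px; under eq_bigr do rewrite /alpha Hdw.
  by rewrite sum_deltaV subrr.
rewrite /Py HPx !linear0 !addr0 gE0 add0r.
under eq_bigr do rewrite /alpha Hdw.
by rewrite sum_deltaV.
Qed.

Lemma ginv_rad g : GLR sigma eps Lam q g ->
  forall y, rad (vsval y) -> rad (vsval ((g^-1)%VF y)).
Proof.
case=> Hb Hr; have [K1 K2] := bij_inv Hb => y Hy.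
by apply/(Hr ((g^-1)%VF y)); rewrite K2.
Qed.

Lemma gE_rad (g : 'End(subvs_of W)) :
  (forall y, rad (vsval y) -> rad (vsval (g y))) -> forall x, x \in W -> rad x -> rad (gE g x).
Proof. by move=> H x Hx Hr; apply: H; rewrite vsprojK. Qed.

Definition gL g : 'End(E) := linfun (gE g).
Lemma gLE g x : gL g x = gE g x. Proof. exact: (linfunE' (gE_lin g)). Qed.

Lemma om_dg (g : 'End(subvs_of W)) :
  (forall y, rad (vsval y) -> rad (vsval (g y))) -> forall j y, y \in W ->
  om (d j) (gE g y) = \sum_l om (d j) (gE g (w l)) * om (d l) y.
Proof.
move=> Hg j y Hy; have Hr := Wcoord Hy.
have Ey : y = (y - \sum_l sigma (om (d l) y) *: w l) + \sum_l sigma (om (d l) y) *: w l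
  by rewrite subrK.
move: Hr; set r := y - _ => Hr.
have Hrr : rad (gE g r) by apply: gE_rad => //; apply: HRW.
rewrite {1}Ey -(gLE g (r + _)) linearD linear_sum /= omDr gLE Hrr.1 add0r omsumr.
by apply: eq_bigr => l _; rewrite linearZ /= omZr sK gLE.
Qed.

Lemma gEK g : GLR sigma eps Lam q g -> forall x, x \in W -> gE (g^-1)%VF (gE g x) = x.
Proof. by case=> Hb _ x Hx; rewrite /gE vsvalK (bij_inv Hb).1 vsprojK. Qed.
Lemma gEVK g : GLR sigma eps Lam q g -> forall x, x \in W -> gE g (gE (g^-1)%VF x) = x.
Proof. by case=> Hb _ x Hx; rewrite /gE vsvalK (bij_inv Hb).2 vsprojK. Qed.

Lemma key g : GLR sigma eps Lam q g -> forall j x, x \in W ->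
  om (Dm g j) (gE g x) = om (d j) x.
Proof.
move=> Hg j x Hx.
rewrite -{2}(gEK Hg Hx) (om_dg (ginv_rad Hg)) ?gE_W // /Dm omsuml.
by apply: eq_bigr => l _; rewrite omZl.
Qed.

Lemma om_pi v v' : v \in Wp -> v' \in Wp -> om v' v = omF (pi v') (pi v).
Proof.
case: HQ => _ _ _ Hn Hv Hv'.
by rewrite -(null_om (p' := fun a b => qF (pi a) (pi b)) Hn Hv Hv').
Qed.
Lemma omT a b : om (T a) (T b) = omF a b.
Proof. by rewrite om_pi ?HT1 // !HT2. Qed.
Lemma qT a : q (T a) (T a) - qF a a \in Lam.
Proof.
case: HQ => _ _ _ [_ Hn]; have := LamN (Hn _ (HT1 a)).
by rewrite HT2 opprB.
Qed.

Definition Dv := (\sum_(l < k) <[d l]>)%VS.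
Lemma dDv l : d l \in Dv.
Proof. rewrite /Dv (bigD1 l) //=; apply: (subvP (addvSl _ _)); exact: memv_line. Qed.

Lemma Dv_oml x : x \in Dv -> forall y, (forall l, om (d l) y = 0) -> om x y = 0.
Proof.
move=> /memv_sumP [vs Hvs ->] y H; rewrite omsuml big1 // => l _.
by have /vlineP [c ->] := Hvs l isT; rewrite omZl H mulr0.
Qed.
Lemma Dv_om x y : x \in Dv -> y \in Dv -> om x y = 0.
Proof.
move=> Hx Hy; apply: Dv_oml => // l; apply: om_eq0; apply: Dv_oml => // m.
Qed.
Lemma Dv_q x : x \in Dv -> q x x \in Lam.
Proof.
move=> /memv_sumP [vs Hvs ->].
have : (\sum_(i < k | xpredT i) vs i \in Dv) /\ q (\sum_(i < k | xpredT i) vs i) (\sum_(i < k | xpredT i) vs i) \in Lam.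
  apply: (big_ind (fun z => z \in Dv /\ q z z \in Lam)).
  - by rewrite rpred0 q0l Lam0.
  - move=> z1 z2 [H1 H2] [H3 H4]; split; first by rewrite rpredD.
    have := qsum_Lam z1 z2; rewrite Dv_om // addr0 => H.
    by have := LamD H (LamD H2 H4); rewrite subrK.
  - move=> l _; have /vlineP [c ->] := Hvs l isT; split; first by rewrite rpredZ // dDv.
    by rewrite qZl qZr mulrA LamM.
by case.
Qed.
Lemma T_Dv a x : x \in Dv -> om (T a) x = 0.
Proof. by move=> Hx; apply: om_eq0; apply: Dv_oml => // l; apply: om_eq0. Qed.
Lemma Dm_Dv g j : Dm g j \in Dv.
Proof. by rewrite /Dm rpred_sum // => l _; rewrite rpredZ // dDv. Qed.

Lemma om_ext_r (f : 'End(E)) x : (forall y, y \in W -> om (f x) (f y) = om x y) ->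
  (forall a, om (f x) (f (T a)) = om x (T a)) -> (forall j, om (f x) (f (d j)) = om x (d j)) ->
  forall v, om (f x) (f v) = om x v.
Proof.
move=> H1 H2 H3 v; have Hv := decomp v.
rewrite [in f v]Hv [in om x v]Hv; move: (Py_W v); move: (Py v) (Px v) => A B HA.
rewrite !linearD linear_sum !omDr !omsumr H1 // H2; congr (_ + _); apply: eq_bigr => j _.
by rewrite linearZ /= !omZr H3.
Qed.

Lemma om_ext_l (f : 'End(E)) : (forall x, x \in W -> forall v, om (f x) (f v) = om x v) ->
  (forall a v, om (f (T a)) (f v) = om (T a) v) -> (forall j v, om (f (d j)) (f v) = om (d j) v) ->
  forall u v, om (f u) (f v) = om u v.
Proof.
move=> H1 H2 H3 u v; have Hu := decomp u.
rewrite [in f u]Hu [in om u v]Hu; move: (Py_W u); move: (Py u) (Px u) => A B HA.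
rewrite !linearD linear_sum !omDl !omsuml H1 // H2; congr (_ + _); apply: eq_bigr => j _.
by rewrite linearZ /= !omZl H3.
Qed.

Definition isoF (h : 'End(F)) := isomE sigma eps Lam qF h.

Lemma om_pres g h : GLR sigma eps Lam q g -> isoF h ->
  forall u v, om (s g h u) (s g h v) = om u v.
Proof.
move=> Hg [_ Hh].
have HhF a b : omF (h a) (h b) = omF a b.
  exact: (null_om (p' := fun a b => qF (h a) (h b)) Hh I I).
have HTW a y : y \in W -> om (T a) y = 0 by move=> Hy; move/orthvP: (HT1 a); apply.
apply: om_ext_l.
- move=> x Hx; apply: om_ext_r.
  + by move=> y Hy; rewrite !sW // !HWiso.1 ?gE_W.
  + move=> a; rewrite sW // sT.
    by rewrite (om_eq0 (HTW _ _ (gE_W _ _))) (om_eq0 (HTW _ _ Hx)).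
  + by move=> j; rewrite sW // sd om_sym key // -om_sym.
- move=> a; apply: om_ext_r.
  + by move=> y Hy; rewrite sT sW // !HTW ?gE_W.
  + by move=> b; rewrite !sT !omT.
  + by move=> j; rewrite sT sd T_Dv ?Dm_Dv // HT3.
- move=> j; apply: om_ext_r.
  + by move=> y Hy; rewrite sd sW // key.
  + move=> b; rewrite sT sd.
    by rewrite (om_eq0 (T_Dv _ (Dm_Dv _ _))) (om_eq0 (HT3 _ _)).
  + by move=> l; rewrite !sd !Dv_om ?Dm_Dv ?dDv.
Qed.

Lemma LamE x y : x \in Lam -> x = y -> y \in Lam. Proof. by move=> H <-. Qed.

Lemma pres_add x y x' y' : q x' x' - q x x \in Lam -> q y' y' - q y y \in Lam ->
  om y' x' = om y x -> q (x' + y') (x' + y') - q (x + y) (x + y) \in Lam.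
Proof.
move=> Hx Hy Ho; have H1 := qsum_Lam x' y'; have H2 := qsum_Lam x y.
rewrite Ho in H1; apply: (LamE (LamD (LamD (LamB H1 H2) Hx) Hy)); ring.
Qed.

Lemma Q_pres g h : GLR sigma eps Lam q g -> isoF h ->
  forall v, q (s g h v) (s g h v) - q v v \in Lam.
Proof.
move=> Hg Hh v; have Hom := om_pres Hg Hh.
have HhQ : forall a, qF (h a) (h a) - qF a a \in Lam.
  by move=> a; case: Hh => _ [_ H]; apply: H.
have Hv := decomp v.
have HA := Py_W v.
have HC : \sum_j alpha j v *: d j \in Dv by rewrite rpred_sum // => j _; rewrite rpredZ // dDv.
move: Hv HA HC; move: (Py v) (pi (Px v)) (\sum_j alpha j v *: d j) => A b C -> HA HC.
have HfC : s g h C \in Dv.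
  have /memv_sumP [vs Hvs ->] := HC.
  rewrite linear_sum rpred_sum // => l _.
  by have /vlineP [c ->] := Hvs l isT; rewrite linearZ /= sd rpredZ // Dm_Dv.
rewrite (raddfD (s g h) (A + T b) C); apply: pres_add; last exact: Hom.
- rewrite raddfD /= sW // sT; apply: pres_add.
  + exact: LamB (HWiso.2 _ (gE_W _ _)) (HWiso.2 _ HA).
  + by apply: (LamE (LamB (LamD (qT (h b)) (HhQ b)) (qT b))); ring.
  + by have := Hom (T b) A; rewrite sT sW.
- exact: LamB (Dv_q HfC) (Dv_q HC).
Qed.

Lemma null_of (f : 'End(E)) : (forall u v, om (f u) (f v) = om u v) ->
  (forall v, q (f v) (f v) - q v v \in Lam) ->
  nullform sigma eps Lam (fun _ => True) (fun v w => q (f v) (f w) - q v w).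
Proof.
move=> H1 H2; split => [v x _ _|v _]; last exact: H2 v.
have := H1 x v; rewrite /omega => E1.
have -> : q (f x) (f v) = q x v + eps * sigma (q v x) - eps * sigma (q (f v) (f x)).
  by rewrite -E1; ring.
rewrite rmorphB; ring.
Qed.

Lemma inv_comp (V : vectType K) (f1 f2 : 'End(V)) : bijective f1 -> bijective f2 ->
  ((f1 \o f2)^-1 = f2^-1 \o f1^-1)%VF.
Proof.
move=> B1 B2; have [K1 K1'] := bij_inv B1; have [K2 K2'] := bij_inv B2.
have B12 : bijective (f1 \o f2)%VF.
  exists (f2^-1 \o f1^-1)%VF => x; rewrite !comp_lfunE.
    by rewrite K1 K2.
  by rewrite K2' K1'.
have [_ K12'] := bij_inv B12.
apply/lfunP => y; apply: (bij_inj B12).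
by rewrite K12' !comp_lfunE K2' K1'.
Qed.

Lemma s_comp g1 g2 h1 h2 : GLR sigma eps Lam q g1 -> GLR sigma eps Lam q g2 ->
  s (g1 \o g2)%VF (h1 \o h2)%VF = (s g1 h1 \o s g2 h2)%VF.
Proof.
move=> Hg1 Hg2; apply: ext.
- move=> x Hx; rewrite comp_lfunE (sW _ _ Hx) (sW _ _ Hx) (sW _ _ (gE_W _ _)).
  by rewrite gE_comp.
- by move=> a; rewrite comp_lfunE !sT comp_lfunE.
- move=> j; rewrite comp_lfunE !sd.
  have Hc m : om (d j) (gE ((g1 \o g2)^-1)%VF (w m)) =
      \sum_l om (d j) (gE (g2^-1)%VF (w l)) * om (d l) (gE (g1^-1)%VF (w m)).
    rewrite (inv_comp Hg1.1 Hg2.1) -gE_comp (om_dg (ginv_rad Hg2)) //.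
    exact: gE_W.
  rewrite [Dm g2 j]/Dm linear_sum /Dm.
  under eq_bigr do rewrite Hc scaler_suml.
  rewrite exchange_big /=; apply: eq_bigr => l _.
  rewrite linearZ /= sd /Dm scaler_sumr; apply: eq_bigr => m _.
  by rewrite scalerA.
Qed.

Lemma s_id : s \1%VF \1%VF = \1%VF.
Proof.
have B1 : bijective (\1%VF : 'End(subvs_of W)) by exists \1%VF => x; rewrite !id_lfunE.
have [K1 _] := bij_inv B1.
have Hid y : (\1%VF : 'End(subvs_of W))^-1%VF y = y by have := K1 y; rewrite id_lfunE.
apply: ext.
- by move=> x Hx; rewrite sW // id_lfunE /gE id_lfunE vsprojK.
- by move=> a; rewrite sT !id_lfunE.
- move=> j; rewrite sd id_lfunE /Dm.
  under eq_bigr do rewrite /gE Hid vsprojK ?Hw // Hdw.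
  exact: sum_deltaV.
Qed.

Lemma GLR_inv g : GLR sigma eps Lam q g -> GLR sigma eps Lam q (g^-1)%VF.
Proof.
move=> Hg; have := Hg; case=> Hb Hr; have [K1 K2] := bij_inv Hb.
split; first by exists g.
move=> y; split; first exact: ginv_rad.
by move=> H; have := (Hr ((g^-1)%VF y)).1 H; rewrite K2.
Qed.

Lemma s_bij g h : GLR sigma eps Lam q g -> isoF h -> bijective (s g h).
Proof.
move=> Hg [Hbh _]; have Hg' := GLR_inv Hg.
have [K1 K2] := bij_inv Hg.1; have [Kh1 Kh2] := bij_inv Hbh.
have E1 : (g^-1 \o g)%VF = \1%VF by apply/lfunP => y; rewrite comp_lfunE id_lfunE K1.
have E2 : (g \o g^-1)%VF = \1%VF by apply/lfunP => y; rewrite comp_lfunE id_lfunE K2.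
have E3 : (h^-1 \o h)%VF = \1%VF by apply/lfunP => y; rewrite comp_lfunE id_lfunE Kh1.
have E4 : (h \o h^-1)%VF = \1%VF by apply/lfunP => y; rewrite comp_lfunE id_lfunE Kh2.
exists (s (g^-1)%VF (h^-1)%VF) => v.
  by rewrite -comp_lfunE -s_comp // E1 E3 s_id id_lfunE.
by rewrite -comp_lfunE -s_comp // E2 E4 s_id id_lfunE.
Qed.

Lemma s_img g h : GLR sigma eps Lam q g -> (s g h @: W = W)%VS.
Proof.
move=> Hg; apply/eqP; rewrite eqEsubv; apply/andP; split; apply/subvP => x.
  by move/memv_imgP => [y Hy ->]; rewrite sW // gE_W.
move=> Hx; rewrite -(gEVK Hg Hx) -(sW g h) ?gE_W //; apply: memv_img; exact: gE_W.
Qed.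

Lemma s_res g h (y : subvs_of W) : s g h (vsval y) = vsval (g y).
Proof. by rewrite sW ?subvsP // gE_val. Qed.

Lemma s_quot g h v : v \in Wp -> pi (s g h v) = h (pi v).
Proof.
move=> Hv.
have Ha j : alpha j v = 0 by rewrite /alpha; move/orthvP: Hv; apply; apply: Hw.
have HPx : Px v = v by rewrite /Px big1 ?subr0 // => j _; rewrite Ha scale0r.
rewrite sE /sfun big1 => [|j _]; last by rewrite Ha scale0r.
by rewrite addr0 linearD /= piW ?gE_W // add0r HT2 HPx.
Qed.

Lemma s_fixU (U : {vspace E}) g h :
  (forall u, u \in U -> exists c : 'I_k -> K, rad (u - \sum_j c j *: d j)) ->
  ATid sigma eps Lam q (W := W) (W :&: orthv sigma eps q U)%VS g ->
  forall u, u \in U -> s g h u = u.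
Proof.
move=> HU [Hb Hmov Hfix] u Hu.
have [c Hc] := HU u Hu; move: Hc; set r := u - _ => Hc.
have HrW : r \in W := HRW Hc.
have Eur : u - r = \sum_j c j *: d j by rewrite /r opprB addrC subrK.
have Hsr : s g h r = r by rewrite sW // /gE Hfix ?vsprojK.
have [K1 K2] := bij_inv Hb.
have Hgi l : om (u - r) (gE (g^-1)%VF (w l)) = om (u - r) (w l).
  have Hz : w l - gE (g^-1)%VF (w l) \in orthv sigma eps q U.
    have := Hmov ((g^-1)%VF (vsproj W (w l))); rewrite K2 vsprojK // => /memv_capP [_ H].
    exact: H.
  have H0 : om (u - r) (w l - gE (g^-1)%VF (w l)) = 0.
    rewrite omBl (om_eq0 (Hc.1 _)) subr0; apply: om_eq0.
    by move/orthvP: Hz; apply.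
  by apply/eqP; rewrite eq_sym -subr_eq0 -omBr H0.
have -> : u = r + (u - r) by rewrite addrC subrK.
rewrite raddfD /= Hsr; congr (_ + _).
transitivity (\sum_l om (u - r) (gE (g^-1)%VF (w l)) *: d l).
  rewrite Eur linear_sum.
  under [RHS]eq_bigr do rewrite omsuml scaler_suml.
  rewrite exchange_big /=; apply: eq_bigr => j _.
  rewrite linearZ /= sd /Dm scaler_sumr; apply: eq_bigr => l _.
  by rewrite omZl scalerA.
under eq_bigr do rewrite Hgi.
rewrite Eur; apply: eq_bigr => l _; congr (_ *: _).
rewrite omsuml; under eq_bigr do rewrite omZl Hdw.
exact: sum_delta2.
Qed.

Lemma core_split1 : exists s0, split_section sigma eps Lam q qF pi
  (fun f => isomE sigma eps Lam q f /\ (f @: W = W)%VS) (GLR sigma eps Lam q (W:=W)) s0.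
Proof.
exists (fun p => s p.1 p.2); split.
- move=> g h Hg Hh /=; split.
  + split; last exact: s_img.
    split; first exact: s_bij.
    by apply: null_of; [exact: om_pres | exact: Q_pres].
  + exact: s_res.
  + exact: s_quot.
- by move=> g1 h1 g2 h2 Hg1 _ Hg2 _ /=; apply: s_comp.
Qed.

Lemma core_split2 (U : {vspace E}) :
  (forall u, u \in U -> exists c : 'I_k -> K, rad (u - \sum_j c j *: d j)) ->
  exists s0, split_section sigma eps Lam q qF pi
    (fun f => [/\ isomE sigma eps Lam q f, (forall u, u \in U -> f u = u) & (f @: W = W)%VS])
    (ATid sigma eps Lam q (W:=W) (W :&: orthv sigma eps q U)%VS) s0.
Proof.
move=> HU; exists (fun p => s p.1 p.2); split.
- move=> g h Hg Hh /=; have Hg' := ATid_GLR Hg; split.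
  + split; last exact: s_img.
    * split; first exact: s_bij.
      by apply: null_of; [exact: om_pres | exact: Q_pres].
    * exact: s_fixU.
  + exact: s_res.
  + exact: s_quot.
- move=> g1 h1 g2 h2 Hg1 _ Hg2 _ /=.
  by apply: s_comp; [exact: (ATid_GLR Hg1) | exact: (ATid_GLR Hg2)].
Qed.

End Core.

Lemma om_we k (w e : 'I_k -> E) (Hwe : forall i j, om (e j) (w i) = (i == j)%:R) l j :
  om (w l) (e j) = eps * (l == j)%:R.
Proof. by rewrite om_sym Hwe rmorph_nat. Qed.

Lemma isotropize (W : {vspace E}) k (w e : 'I_k -> E) (B : pred 'I_k) :
  isotropic sigma eps Lam q W -> (forall i, w i \in W) ->
  (forall i j, om (e j) (w i) = (i == j)%:R) ->
  (forall i j : 'I_k, B i -> (j < i)%N -> B j) ->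
  (forall i j, B i -> B j -> om (e i) (e j) = 0) -> (forall i, B i -> q (e i) (e i) \in Lam) ->
  exists d : 'I_k -> E,
    [/\ (forall i j, om (d j) (w i) = (i == j)%:R),
        (forall i j, om (d i) (d j) = 0), (forall j, q (d j) (d j) \in Lam),
        (forall j, B j -> d j = e j) & (forall j, d j - e j \in W)].
Proof.
move=> HWi Hw Hwe HB HBo HBq.
pose a (j i : 'I_k) : K := if (j < i)%N then - (sigma eps * om (e i) (e j))
  else if j == i then (if q (e i) (e i) \in Lam then 0 else - (sigma eps * q (e i) (e i)))
  else 0.
pose X i := \sum_j a j i *: w j.
have HX i : X i \in W by rewrite rpred_sum // => j _; rewrite rpredZ.
pose d i := e i + X i.
have HXe i j : om (e i) (X j) = sigma (a i j).
  rewrite omsumr; under eq_bigr do rewrite omZr Hwe.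
  by rewrite (eq_bigr (fun l => (l == i)%:R * sigma (a l j))) ?sum_delta // => l _; rewrite eq_sym.
have HXe' i j : om (X i) (e j) = a j i * eps.
  rewrite omsuml; under eq_bigr do rewrite omZl (om_we Hwe).
  by rewrite (eq_bigr (fun l => (a l i * eps) * (l == j)%:R)) ?sum_delta' // => l _; rewrite mulrA.
have Hdd i j : om (d i) (d j) = om (e i) (e j) + sigma (a i j) + a j i * eps.
  rewrite /d omDl !omDr HXe HXe' (HWi.1 _ _ (HX i) (HX j)); ring.
have HdQ i : q (d i) (d i) \in Lam.
  have H1 := qsum_Lam (e i) (X i); rewrite HXe' in H1.
  have H2 := HWi.2 _ (HX i).
  rewrite /a ltnn eqxx in H1; case: ifP H1 => HL H1.
    by apply: (LamE (LamD (LamD H1 HL) H2)); rewrite /d; ring.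
  have E1 : sigma eps * eps = 1 by rewrite mulrC epsK.
  rewrite mulNr -mulrA [q _ _ * eps]mulrC mulrA E1 mul1r in H1.
  by apply: (LamE (LamD H1 H2)); rewrite /d; ring.
exists d; split.
- by move=> i j; rewrite /d omDl Hwe HWi.1 ?addr0.
- move=> i j; case: (ltngtP i j) => Hij.
  + have Hne : (j == i) = false by rewrite -(inj_eq val_inj) /= gtn_eqF.
    have Hne' : (i == j) = false by rewrite eq_sym.
    rewrite Hdd /a Hij ltnNge (ltnW Hij) /= ?Hne ?Hne' mul0r addr0 rmorphN rmorphM sK.
    by rewrite [om (e i) (e j)]om_sym; ring.
  + have Hne : (i == j) = false by rewrite -(inj_eq val_inj) /= gtn_eqF.
    have Hne' : (j == i) = false by rewrite eq_sym.
    have E1 : sigma eps * eps = 1 by rewrite mulrC epsK.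
    rewrite Hdd /a Hij ltnNge (ltnW Hij) /= ?Hne ?Hne' rmorph0 addr0 mulNr -mulrA.
    by rewrite [om _ _ * eps]mulrC mulrA E1 mul1r subrr.
  + have -> : i = j by apply: val_inj.
    by apply: Lam_om; apply: HdQ.
- exact: HdQ.
- move=> j Bj; rewrite /d /X big1 ?addr0 // => l _; rewrite /a.
  case: ifP => Hlj; first by rewrite HBo ?mulr0 ?oppr0 ?scale0r //; apply: HB Hlj.
  case: eqP => [->|]; last by rewrite scale0r.
  by rewrite HBq // scale0r.
- by move=> j; rewrite /d addrC addKr HX.
Qed.

Lemma mkT (W : {vspace E}) (F : vectType K) (qF : F -> F -> K) (pi : 'Hom(E, F)) k
  (w d : 'I_k -> E) :
  is_quotient sigma eps Lam q W qF pi -> isotropic sigma eps Lam q W -> (forall i, w i \in W) ->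
  (forall i j, om (d j) (w i) = (i == j)%:R) ->
  exists T : 'Hom(F, E), [/\ forall f, T f \in orthv sigma eps q W,
     forall f, pi (T f) = f & forall f j, om (T f) (d j) = 0].
Proof.
move=> HQ HWi Hw Hdw.
pose Wp := orthv sigma eps q W.
have HWWp x : x \in W -> x \in Wp by move=> Hx; apply/orthvP => u Hu; apply: HWi.1.
have HpiW x : x \in W -> pi x = 0.
  case: HQ => _ _ HK _ Hx; move: Hx; rewrite -HK => /memv_capP [_].
  by rewrite memv_ker => /eqP.
pose p : 'Hom(subvs_of Wp, F) := (pi \o linfun vsval)%VF.
pose T0 : 'Hom(F, E) := (linfun vsval \o p^-1)%VF.
have HT0a f : T0 f \in Wp by rewrite comp_lfunE lfunE /= subvsP.
have HT0b f : pi (T0 f) = f.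
  have Hf : f \in limg p.
    case: HQ => _ Himg _ _.
    have : f \in (pi @: Wp)%VS by rewrite Himg memvf.
    move/memv_imgP => [v Hv ->].
    have -> : pi v = p (vsproj Wp v) by rewrite comp_lfunE lfunE /= vsprojK.
    by apply: memv_img; exact: memvf.
  have := limg_lfunVK Hf; rewrite comp_lfunE lfunE /= => H.
  by rewrite comp_lfunE lfunE /= H.
pose Tf f := T0 f - \sum_l (om (T0 f) (d l) * sigma eps) *: w l.
have Tlin : linear Tf.
  move=> a f1 f2; rewrite /Tf linearP /=.
  under eq_bigr do rewrite omDl omZl mulrDl scalerDl -mulrA -scalerA.
  by rewrite big_split /= -scaler_sumr scalerBr opprD addrACA.
exists (linfun Tf); split.
- move=> f; rewrite linfunE' // /Tf rpredB ?HT0a // rpred_sum // => l _.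
  by rewrite rpredZ // HWWp.
- move=> f; rewrite linfunE' // /Tf linearB linear_sum /= HT0b big1 ?subr0 // => l _.
  by rewrite linearZ /= HpiW ?scaler0.
- move=> f j; rewrite linfunE' // /Tf omBl omsuml.
  under eq_bigr do rewrite omZl (om_we Hdw).
  rewrite (eq_bigr (fun l => (om (T0 f) (d l) * sigma eps * eps) * (l == j)%:R)).
    by rewrite sum_delta' -mulrA epsK' mulr1 subrr.
  by move=> l _; rewrite mulrA.
Qed.

Lemma split_l m n (a : 'I_m) : fintype.split (lshift n a) = inl a.
Proof. exact: (unsplitK (inl _ a)). Qed.
Lemma split_r m n (b : 'I_n) : fintype.split (rshift m b) = inr b.
Proof. exact: (unsplitK (inr _ b)). Qed.

Lemma setup (W U : {vspace E}) (F : vectType K) (qF : F -> F -> K) (pi : 'Hom(E, F)) :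
  is_quotient sigma eps Lam q W qF pi -> isotropic sigma eps Lam q W ->
  (forall v, rad v -> v \in W) -> isotropic sigma eps Lam q U ->
  (forall v, rad v -> v \in U) -> (W + orthv sigma eps q U = fullv)%VS ->
  exists k (w d : 'I_k -> E) (T : 'Hom(F, E)),
   [/\ (forall i, w i \in W), (forall x, x \in W -> exists c : 'I_k -> K, rad (x - \sum_i c i *: w i)),
       (forall i j, om (d j) (w i) = (i == j)%:R), (forall i j, om (d i) (d j) = 0) &
       (forall j, q (d j) (d j) \in Lam)] /\
   [/\ (forall f, T f \in orthv sigma eps q W), (forall f, pi (T f) = f),
       (forall f j, om (T f) (d j) = 0) &
       (forall u, u \in U -> exists c : 'I_k -> K, rad (u - \sum_j c j *: d j))].
Proof.
move=> HQ HWi HRW HUi HRU HWU.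
pose Rv := (W :&: orthv sigma eps q fullv)%VS.
have HRv x : x \in Rv <-> rad x.
  split.
    move=> /memv_capP [Hx /orthvP H]; split; last exact: HWi.2.
    by move=> u; apply: om_eq0; apply: H; apply: memvf.
  move=> Hx; rewrite memv_cap HRW //=; apply/orthvP => u _; apply: om_eq0; exact: Hx.1.
pose U' := (U :\: Rv)%VS; pose m := \dim U'; pose ub := vbasis U'.
have HubU' (i : 'I_m) : ub`_i \in U' by apply: vbasis_mem; apply: mem_nth; rewrite size_tuple.
have HubU (i : 'I_m) : ub`_i \in U by exact: (subvP (diffvSl U Rv)) _ (HubU' i).
have Hubf : free ub := basis_free (vbasisP U').
have HUdec u : u \in U -> exists2 u1, u1 \in U' & rad (u - u1).
  move=> Hu; move: Hu; rewrite -{1}(addv_diff_cap U Rv) => /memv_addP [u1 Hu1 [r Hr ->]].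
  exists u1 => //; rewrite addrC addKr; apply/HRv.
  by move: Hr => /memv_capP [].
have Hz : forall c : 'I_m -> K, (forall v, om v (\sum_i c i *: ub`_i) = 0) -> forall i, c i = 0.
  move=> c Hc; pose y := \sum_i c i *: ub`_i.
  have HyU' : y \in U' by rewrite rpred_sum // => i _; rewrite rpredZ.
  have Hry : rad y by split; [exact: Hc | apply: HUi.2; exact: (subvP (diffvSl U Rv)) _ HyU'].
  have : y \in (U' :&: Rv)%VS by rewrite memv_cap HyU' /=; apply/HRv.
  rewrite capv_diff memv0 => /eqP Hy0.
  by move/freeP: Hubf => /(_ c Hy0).
have /fin_all_exists [v Hv] : forall a : 'I_m, exists e, forall i : 'I_m, om e (ub`_i) = eps * (i == a)%:R.
  move=> a; exact: (@gen_dual m (fun i : 'I_m => ub`_i) Hz (fun i => eps * (i == a)%:R)).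
have /fin_all_exists [w1 Hw1] : forall a : 'I_m, exists w1, w1 \in W /\ v a - w1 \in orthv sigma eps q U.
  move=> a; have : v a \in (W + orthv sigma eps q U)%VS by rewrite HWU memvf.
  move/memv_addP => [x Hx [y Hy ->]]; exists x; split => //.
  by rewrite addrC addKr.
have Hw1a (a i : 'I_m) : om (w1 a) (ub`_i) = eps * (i == a)%:R.
  have E1 : om (w1 a) (ub`_i) = om (v a) (ub`_i) - om (v a - w1 a) (ub`_i) by rewrite omBl; ring.
  have H0 : om (v a - w1 a) (ub`_i) = 0 by move/orthvP: (Hw1 a).2; apply.
  by rewrite E1 H0 subr0 Hv.
have Hw1b (a i : 'I_m) : om (ub`_i) (w1 a) = (i == a)%:R.
  by rewrite om_sym Hw1a rmorphM rmorph_nat mulrA epsK mul1r.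
pose W1 := (W :&: orthv sigma eps q U)%VS; pose W1' := (W1 :\: Rv)%VS.
pose m2 := \dim W1'; pose wb := vbasis W1'.
have HwbW1' (b : 'I_m2) : wb`_b \in W1' by apply: vbasis_mem; apply: mem_nth; rewrite size_tuple.
have HwbW1 (b : 'I_m2) : wb`_b \in W1 by exact: (subvP (diffvSl W1 Rv)) _ (HwbW1' b).
have HwbW (b : 'I_m2) : wb`_b \in W by move: (HwbW1 b) => /memv_capP [].
have HwbU (b : 'I_m2) : wb`_b \in orthv sigma eps q U by move: (HwbW1 b) => /memv_capP [].
have Hwbf : free wb := basis_free (vbasisP W1').
pose k := (m + m2)%N.
pose w (i : 'I_k) := match fintype.split i with inl a => w1 a | inr b => wb`_b end.
have Hwl a : w (lshift m2 a) = w1 a by rewrite /w split_l.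
have Hwr b : w (rshift m b) = wb`_b by rewrite /w split_r.
have Hw i : w i \in W.
  by rewrite /w; case: (fintype.split i) => [a|b]; [exact: (Hw1 a).1 | exact: HwbW].
have Hubw (a : 'I_m) (i : 'I_k) : om (ub`_a) (w i) = (lshift m2 a == i)%:R.
  rewrite -[i]splitK; case: (fintype.split i) => [a'|b] /=.
    by rewrite Hwl Hw1b eq_lshift.
  rewrite Hwr eq_lrshift; apply: om_eq0; move/orthvP: (HwbU b); apply; exact: HubU.
have Hspan x : x \in W -> exists c : 'I_k -> K, rad (x - \sum_i c i *: w i).
  move=> Hx.
  pose c1 (a : 'I_m) := om x (ub`_a) * sigma eps.
  pose x1 := x - \sum_a c1 a *: w1 a.
  have Hx1U : x1 \in orthv sigma eps q U.
    apply/orthvP => u Hu; have [u1 Hu1 Hr] := HUdec u Hu.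
    rewrite -[u](subrK u1) omDr (Hr.1 x1) add0r.
    rewrite (coord_vbasis Hu1) omsumr big1 // => i _; rewrite omZr -/ub.
    suff -> : om x1 (ub`_i) = 0 by rewrite mul0r.
    rewrite /x1 omBl omsuml; under eq_bigr do rewrite omZl Hw1a.
    rewrite (eq_bigr (fun a => (c1 a * eps) * (i == a)%:R)) => [|a _]; last by rewrite mulrA.
    by rewrite sum_delta2 /c1 -mulrA epsK' mulr1 subrr.
  have Hx1W1 : x1 \in W1.
    rewrite memv_cap Hx1U andbT /x1 rpredB // rpred_sum // => a _.
    by rewrite rpredZ // (Hw1 a).1.
  move: Hx1W1; rewrite -{1}(addv_diff_cap W1 Rv) => /memv_addP [x2 Hx2 [r2 Hr2 Ex1]].
  exists (fun i => match fintype.split i with inl a => c1 a | inr b => coord wb b x2 end).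
  rewrite big_split_ord /=.
  rewrite (eq_bigr (fun a => c1 a *: w1 a)); last by move=> a _; rewrite split_l Hwl.
  rewrite (eq_bigr (fun b : 'I_m2 => coord wb b x2 *: wb`_b)); last first.
    by move=> b _; rewrite split_r Hwr.
  rewrite -(coord_vbasis Hx2).
  have -> : x - (\sum_a c1 a *: w1 a + x2) = r2.
    by rewrite opprD addrA -/x1 Ex1 addrC addKr.
  by apply/HRv; move: Hr2 => /memv_capP [].
have Hwz : forall c : 'I_k -> K, (forall v, om v (\sum_i c i *: w i) = 0) -> forall i, c i = 0.
  move=> c Hc.
  have Hl a : c (lshift m2 a) = 0.
    have := Hc (ub`_a); rewrite omsumr.
    under eq_bigr do rewrite omZr Hubw.
    rewrite (eq_bigr (fun i => (i == lshift m2 a)%:R * sigma (c i))) => [|i _]; last by rewrite eq_sym.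
    by rewrite sum_delta => H; rewrite -[c _]sK H rmorph0.
  pose y := \sum_i c i *: w i.
  have Hy : y = \sum_b c (rshift m b) *: wb`_b.
    rewrite /y big_split_ord /= big1 ?add0r => [|a _]; last by rewrite Hl scale0r.
    by apply: eq_bigr => b _; rewrite Hwr.
  have Hry : rad y.
    split; first exact: Hc.
    by apply: HWi.2; rewrite /y rpred_sum // => i _; rewrite rpredZ.
  have : y \in (W1' :&: Rv)%VS.
    rewrite memv_cap; apply/andP; split; last by apply/HRv.
    by rewrite Hy rpred_sum // => b _; rewrite rpredZ.
  rewrite capv_diff memv0 => /eqP Hy0; rewrite Hy in Hy0.
  move/freeP: Hwbf => /(_ _ Hy0) Hr.
  by move=> i; rewrite -[i]splitK; case: (fintype.split i) => [a|b] /=; [exact: Hl | exact: Hr].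
have /fin_all_exists [e He] : forall j : 'I_k, exists e, forall i : 'I_k, om e (w i) = (i == j)%:R.
  by move=> j; exact: (@gen_dual k w Hwz (fun i => (i == j)%:R)).
pose e' (j : 'I_k) := match fintype.split j with inl a => ub`_a | inr _ => e j end.
have He'l a : e' (lshift m2 a) = ub`_a by rewrite /e' split_l.
have He' i j : om (e' j) (w i) = (i == j)%:R.
  rewrite -[j]splitK; case: (fintype.split j) => [a|b] /=.
    by rewrite He'l Hubw eq_sym.
  by rewrite /e' split_r He.
have HBl (i : 'I_k) : (i < m)%N -> exists a, i = lshift m2 a.
  by move=> Hi; exists (Ordinal Hi); apply: val_inj.
have HBo (i j : 'I_k) : (i < m)%N -> (j < m)%N -> om (e' i) (e' j) = 0.
  by move=> /HBl [a ->] /HBl [b ->]; rewrite !He'l; apply: HUi.1; exact: HubU.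
have HBq (i : 'I_k) : (i < m)%N -> q (e' i) (e' i) \in Lam.
  by move=> /HBl [a ->]; rewrite He'l; apply: HUi.2; exact: HubU.
have [d [Hd1 Hd2 Hd3 Hd4 _]] := isotropize (B := fun i : 'I_k => (i < m)%N) HWi Hw He'
  (fun i j Hi Hj => ltn_trans Hj Hi) HBo HBq.
have [T [HT1 HT2 HT3]] := mkT HQ HWi Hw Hd1.
exists k, w, d, T; split; first by split.
split => //.
move=> u Hu; have [u1 Hu1 Hr] := HUdec u Hu.
exists (fun j => match fintype.split j with inl a => coord ub a u1 | inr _ => 0 end).
rewrite big_split_ord /= [X in - (_ + X)]big1 ?addr0 => [|b _]; last by rewrite split_r scale0r.
rewrite (eq_bigr (fun a => coord ub a u1 *: ub`_a)) => [|a _]; last first.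
  by rewrite split_l (Hd4 (lshift m2 a) (ltn_ord a)) He'l.
by rewrite -(coord_vbasis Hu1).
Qed.

Lemma part1 (W : {vspace E}) : Pomega sigma eps Lam q W ->
  forall (F : vectType K) (qF : F -> F -> K) (pi : 'Hom(E, F)),
    is_quotient sigma eps Lam q W qF pi ->
    exists s0, split_section sigma eps Lam q qF pi
      (fun f => isomE sigma eps Lam q f /\ (f @: W = W)%VS)
      (GLR sigma eps Lam q (W:=W)) s0.
Proof.
move=> [HWi HRW _ _] F qF pi HQ.
pose Rv := (W :&: orthv sigma eps q fullv)%VS.
have HRvi : isotropic sigma eps Lam q Rv.
  split.
    move=> x y /memv_capP [_ /orthvP Hx] _; apply: Hx; exact: memvf.
  by move=> x /memv_capP [Hx _]; apply: HWi.2.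
have HRRv v : rad v -> v \in Rv.
  move=> Hv; rewrite memv_cap HRW //=; apply/orthvP => u _; apply: om_eq0; exact: Hv.1.
have HWU : (W + orthv sigma eps q Rv = fullv)%VS.
  apply/eqP; rewrite eqEsubv subvf /=; apply/subvP => v _.
  apply: (subvP (addvSr W _)); apply/orthvP => r /memv_capP [_ /orthvP Hr].
  by apply: om_eq0; apply: Hr; exact: memvf.
have [k [w [d [T [[Hw Hspan Hdw Hdd HdQ] [HT1 HT2 HT3 _]]]]]] := setup HQ HWi HRW HRvi HRRv HWU.
by apply: core_split1.
Qed.

Lemma part2 (U W : {vspace E}) : Pomega sigma eps Lam q U -> PomegaU sigma eps Lam q U W ->
  forall (F : vectType K) (qF : F -> F -> K) (pi : 'Hom(E, F)),
    is_quotient sigma eps Lam q W qF pi ->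
    exists s0, split_section sigma eps Lam q qF pi
      (fun f => [/\ isomE sigma eps Lam q f, (forall u, u \in U -> f u = u) & (f @: W = W)%VS])
      (ATid sigma eps Lam q (W:=W) (W :&: orthv sigma eps q U)%VS) s0.
Proof.
move=> [HUi HRU _ _] [[HWi HRW _ _] HWU] F qF pi HQ.
have [k [w [d [T [[Hw Hspan Hdw Hdd HdQ] [HT1 HT2 HT3 HU6]]]]]] := setup HQ HWi HRW HUi HRU HWU.
by apply: core_split2.
Qed.

End Basic.

Unset Implicit Arguments.
Local Close Scope ring_scope.

Theorem proposition5p5 (K : fieldType) (sigma : {rmorphism K -> K}) (eps : K)
    (Lam : {pred K}) (E : vectType K) (q : E -> E -> K) :
  form_param sigma eps Lam -> sesq sigma q ->
  (* (1) *)
  (forall W : {vspace E}, Pomega sigma eps Lam q W ->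
   forall (F : vectType K) (qF : F -> F -> K) (pi : 'Hom(E, F)),
     is_quotient sigma eps Lam q W qF pi ->
     exists s, split_section sigma eps Lam q qF pi
       (fun f => isomE sigma eps Lam q f /\ (f @: W = W)%VS)
       (GLR sigma eps Lam q (W:=W)) s) /\
  (* (2) *)
  (forall U W : {vspace E}, Pomega sigma eps Lam q U ->
   PomegaU sigma eps Lam q U W ->
   forall (F : vectType K) (qF : F -> F -> K) (pi : 'Hom(E, F)),
     is_quotient sigma eps Lam q W qF pi ->
     exists s, split_section sigma eps Lam q qF pi
       (fun f => [/\ isomE sigma eps Lam q f,
                     (forall u, u \in U -> f u = u) & (f @: W = W)%VS])
       (ATid sigma eps Lam q (W:=W) (W :&: orthv sigma eps q U)%VS) s).
Proof.
move=> Hfp Hsq; split.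
  move=> W HW F qF pi HQ; exact: (part1 Hfp Hsq HW HQ).
move=> U W HU HW F qF pi HQ; exact: (part2 Hfp Hsq HU HW HQ).
Qed.
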